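(* In the setting of the context, $C=Ae_2A$ and $C\cong A\otimes_kA$ as rings, where $A\otimes_kA$ carries the multiplication $(a_1\otimes a_2)(a_3\otimes a_4)=a_1E_M(a_2a_3)\otimes a_4$. Also $C=Be_1B$ and $C\cong B\otimes_kB$ as rings, where $B\otimes_kB$ carries the multiplication $(b_1\otimes b_2)(b_3\otimes b_4)=b_1E_{M_1}(b_2b_3)\otimes b_4$.
   Context: $k$ is a field; $C_R(S)=\{r\in R:rs=sr\ \forall s\in S\}$. $N\subseteq M$ is a strongly separable, irreducible extension of $k$-algebras: $C_M(N)=k1$ and there are an $N$-bimodule map $E:M\to N$ and $x_1,\dots,x_n,y_1,\dots,y_n\in M$ with $\sum_iE(mx_i)y_i=m=\sum_ix_iE(y_im)$ for all $m\in M$, $E(1)\neq0$, $\sum_ix_iy_i\neq0$; normalized so that $E(1)=1$, whence $\sum_ix_iy_i=\lambda^{-1}1$ with $0\neq\lambda\in k$. Basic construction: given $S\subseteq R$, an $S$-bimodule map $E_S:R\to S$ with $E_S(1)=1$ and $r_i,s_i\in R$ with $\sum_iE_S(rr_i)s_i=r=\sum_ir_iE_S(s_ir)$ and $\sum_ir_is_i=\lambda^{-1}1$, set $R_1=R\otimes_SR$ with product $(a\otimes b)(c\otimes d)=aE_S(bc)\otimes d$, unit $\sum_ir_i\otimes s_i$, $R\subseteq R_1$ via $r\mapsto\sum_irr_i\otimes s_i$, Jones idempotent $e=1\otimes1$, $E_R:R_1\to R$, $a\otimes b\mapsto\lambda ab$; then $E_R$, $\lambda^{-1}r_i\otimes1$,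 $1\otimes s_i$ satisfy the same conditions with the same $\lambda$. From $(N\subseteq M,E)$ get $M_1,e_1,E_M$; from $(M\subseteq M_1,E_M)$ get $M_2,e_2,E_{M_1}$. Let $A=C_{M_1}(N)$, $B=C_{M_2}(M)$, $C=C_{M_2}(N)$. Depth 2 is assumed: $M_1$ is free as right $M$-module with basis in $A$, $M_2$ free as right $M_1$-module with basis in $B$. For $a,a'\in A$, $E_M(aa')\in C_M(N)=k1$ and for $b,b'\in B$, $E_{M_1}(bb')\in C_{M_1}(M)=k1$; these are identified with scalars. *)

(* Defs.v *)
From HB Require Import structures.
From mathcomp Require Import all_boot all_order all_algebra.
Set Implicit Arguments. Unset Strict Implicit. Unset Printing Implicit Defensive.
Import GRing.Theory.
Local Open Scope ring_scope.

(* Prop-valued subsets are used throughout (rings here may be infinite). *)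

Definition is_subalgebra (k : fieldType) (R : algType k) (S : R -> Prop) :=
  [/\ S 1, (forall a b, S a -> S b -> S (a + b)),
      (forall a b, S a -> S b -> S (a * b)) & (forall (c : k) a, S a -> S (c *: a))].

Definition centralizer (R : pzRingType) (S : R -> Prop) : R -> Prop :=
  fun r => forall s, S s -> r * s = s * r.

Definition bilin_on (k : fieldType) (X : algType k) (W : lmodType k)
  (P : X -> Prop) (f : X -> X -> W) :=
  forall (c : k) a a' b, P a -> P a' -> P b ->
    f (c *: a + a') b = c *: f a b + f a' b /\
    f b (c *: a + a') = c *: f b a + f b a'.

Definition balanced_on (k : fieldType) (X : algType k) (W : lmodType k)
  (P S : X -> Prop) (f : X -> X -> W) :=
  forall s a b, S s -> P a -> P b -> P (a * s) -> P (s * b) -> f (a * s) b = f a (s * b).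

(* (T, tau) is the tensor product P (x)_S P of the subspace P of X with itself
   over S (characterised by its universal property among k-vector spaces);
   take P := everything for R (x)_S R, and S := nothing for P (x)_k P. *)
Definition is_tensor (k : fieldType) (X : algType k) (P S : X -> Prop)
  (T : lmodType k) (tau : X -> X -> T) :=
  [/\ bilin_on P tau, balanced_on P S tau,
      (forall (W : lmodType k) (f : X -> X -> W), bilin_on P f -> balanced_on P S f ->
         exists g : {linear T -> W}, forall a b, P a -> P b -> g (tau a b) = f a b)
    & (forall (W : lmodType k) (g1 g2 : {linear T -> W}),
         (forall a b, P a -> P b -> g1 (tau a b) = g2 (tau a b)) -> g1 =1 g2)].

(* Main.v *)
Require Import Defs.
From HB Require Import structures.
From mathcomp Require Import all_boot all_order all_algebra.
From Stdlib Require Import ClassicalEpsilon.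
Import GRing.Theory.
Local Open Scope ring_scope.
Set Implicit Arguments. Unset Strict Implicit. Unset Printing Implicit Defensive.

Definition linwrap (k : fieldType) (U V : lmodType k) (f : U -> V) (lf : linear f) : U -> V := f.
HB.instance Definition _ (k : fieldType) (U V : lmodType k) (f : U -> V) (lf : linear f) :=
  GRing.isLinear.Build k U V *:%R (@linwrap k U V f lf) lf.
Definition mklin (k : fieldType) (U V : lmodType k) (f : U -> V) (lf : linear f) : {linear U -> V} :=
  @linwrap k U V f lf.

Lemma scalA_inj (k : fieldType) (M : algType k) (c : k) : c%:A = 0 :> M -> c = 0.
Proof.
move=> h; apply/eqP; apply/negPn/negP => hc.
have : (1 : M) = c^-1 *: (c%:A) by rewrite scalerA mulVf // scale1r.
by rewrite h scaler0; apply/eqP; exact: oner_neq0.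
Qed.

Lemma scalA_injE (k : fieldType) (M : algType k) (c d : k) : c%:A = d%:A :> M -> c = d.
Proof. by move=> h; apply/eqP; rewrite -subr_eq0; apply/eqP/(@scalA_inj k M); rewrite scalerBl h subrr. Qed.

Section Tens.
Variables (k : fieldType) (X : algType k) (P S : X -> Prop) (T : lmodType k) (tau : X -> X -> T).
Hypothesis HT : is_tensor P S tau.

Lemma tens_ext (W : lmodType k) (f g : T -> W) : linear f -> linear g ->
  (forall a b, P a -> P b -> f (tau a b) = g (tau a b)) -> forall t, f t = g t.
Proof. by case: HT => _ _ _ U lf lg H t; exact: (U W (mklin lf) (mklin lg) H t). Qed.

Lemma tens_lift (W : lmodType k) (f : X -> X -> W) : bilin_on P f -> balanced_on P S f ->
  exists g : {linear T -> W}, forall a b, P a -> P b -> g (tau a b) = f a b.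
Proof. by case: HT => _ _ L _; apply: L. Qed.

Lemma tens_bal s a b : S s -> P a -> P b -> P (a * s) -> P (s * b) -> tau (a * s) b = tau a (s * b).
Proof. by case: HT => _ B _ _; apply: B. Qed.

Lemma tens_lin1 c a a' b : P a -> P a' -> P b -> tau (c *: a + a') b = c *: tau a b + tau a' b.
Proof. by case: HT => L _ _ _ ha ha' hb; case: (L c a a' b ha ha' hb). Qed.
Lemma tens_lin2 c a a' b : P a -> P a' -> P b -> tau b (c *: a + a') = c *: tau b a + tau b a'.
Proof. by case: HT => L _ _ _ ha ha' hb; case: (L c a a' b ha ha' hb). Qed.

Hypothesis P0 : P 0.
Hypothesis Pcl : forall c a a', P a -> P a' -> P (c *: a + a').

Lemma PD a a' : P a -> P a' -> P (a + a').
Proof. by move=> h h'; have := Pcl 1 h h'; rewrite scale1r. Qed.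
Lemma PZ c a : P a -> P (c *: a).
Proof. by move=> h; have := Pcl c h P0; rewrite addr0. Qed.
Lemma Psum m (F : 'I_m -> X) : (forall i, P (F i)) -> P (\sum_i F i).
Proof. move=> h; elim/big_ind: _ => //; exact: PD. Qed.

Lemma tens0l b : P b -> tau 0 b = 0.
Proof. move=> hb; have := tens_lin1 1 P0 P0 hb; rewrite !scale1r addr0.
move=> h; apply/esym/(addrI (tau 0 b)); by rewrite addr0 -h. Qed.
Lemma tens0r b : P b -> tau b 0 = 0.
Proof. move=> hb; have := tens_lin2 1 P0 P0 hb; rewrite !scale1r addr0.
move=> h; apply/esym/(addrI (tau b 0)); by rewrite addr0 -h. Qed.
Lemma tensDl a a' b : P a -> P a' -> P b -> tau (a + a') b = tau a b + tau a' b.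
Proof. by move=> *; have := @tens_lin1 1 a a' b; rewrite !scale1r; apply. Qed.
Lemma tensDr a a' b : P a -> P a' -> P b -> tau b (a + a') = tau b a + tau b a'.
Proof. by move=> *; have := @tens_lin2 1 a a' b; rewrite !scale1r; apply. Qed.
Lemma tensZl c a b : P a -> P b -> tau (c *: a) b = c *: tau a b.
Proof. by move=> ha hb; have := @tens_lin1 c a 0 b ha P0 hb; rewrite addr0 tens0l // addr0. Qed.
Lemma tensZr c a b : P a -> P b -> tau b (c *: a) = c *: tau b a.
Proof. by move=> ha hb; have := @tens_lin2 c a 0 b ha P0 hb; rewrite addr0 tens0r // addr0. Qed.
Lemma tens_suml m (F : 'I_m -> X) b : (forall i, P (F i)) -> P b ->
  tau (\sum_i F i) b = \sum_i tau (F i) b.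
Proof.
move=> hF hb; elim: m F hF => [|m IH] F hF; first by rewrite !big_ord0 tens0l.
rewrite !big_ord_recr /= tensDl ?IH //; exact: Psum.
Qed.
Lemma tens_sumr m (F : 'I_m -> X) b : (forall i, P (F i)) -> P b ->
  tau b (\sum_i F i) = \sum_i tau b (F i).
Proof.
move=> hF hb; elim: m F hF => [|m IH] F hF; first by rewrite !big_ord0 tens0r.
rewrite !big_ord_recr /= tensDr ?IH //; exact: Psum.
Qed.
End Tens.

Section Span.
Variables (k : fieldType) (X : algType k) (P : X -> Prop) (T : lmodType k) (tau : X -> X -> T).
Hypothesis HT : is_tensor P (fun _ => False) tau.
Hypothesis P0 : P 0.
Hypothesis Pcl : forall c a a', P a -> P a' -> P (c *: a + a').

Lemma tens_span (p : nat) (u u' : 'I_p -> X) (K K' : 'I_p -> X -> k) :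
  (forall j, P (u j)) -> (forall j, P (u' j)) ->
  (forall j c a a', P a -> P a' -> K j (c *: a + a') = c * K j a + K j a') ->
  (forall j c a a', P a -> P a' -> K' j (c *: a + a') = c * K' j a + K' j a') ->
  (forall a, P a -> a = \sum_j K j a *: u j) -> (forall a, P a -> a = \sum_j K' j a *: u' j) ->
  forall t, exists D : 'I_p -> 'I_p -> k, t = \sum_j \sum_l D j l *: tau (u j) (u' l).
Proof.
move=> Pu Pu' KL KL' Kd Kd' t.
have hex : forall j l, exists g : {linear T -> k^o},
    forall a b, P a -> P b -> g (tau a b) = (K j a * K' l b : k^o).
  move=> j l; apply: (tens_lift HT).
    move=> c a a' b ha ha' hb; rewrite KL // KL' //; split.
      by rewrite mulrDl -mulrA.
    by rewrite mulrDr mulrCA.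
  by [].
pose G j l := sval (constructive_indefinite_description _ (hex j l)).
have GE j l a b : P a -> P b -> G j l (tau a b) = K j a * K' l b.
  by move=> ha hb; rewrite /G; case: constructive_indefinite_description => g /= ->.
pose rho (t : T) := \sum_j \sum_l (G j l t : k) *: tau (u j) (u' l).
have lrho : linear rho.
  move=> c v w; rewrite /rho scaler_sumr -big_split; apply: eq_bigr => j _.
  rewrite scaler_sumr -big_split; apply: eq_bigr => l _.
  by rewrite linearP scalerDl scalerA.
have lid : linear (fun t : T => t) by [].
suff rhoE : forall t, rho t = t by exists (fun j l => G j l t); rewrite -[LHS]rhoE.
apply: (tens_ext HT lrho lid) => a b ha hb.
have PZu i : P (K i a *: u i) by apply: (PZ P0 Pcl).
have PZu' i : P (K' i b *: u' i) by apply: (PZ P0 Pcl).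
have Ps1 : P (\sum_i K' i b *: u' i) by apply: (Psum P0 Pcl).
rewrite /rho [in RHS](Kd a ha) [in RHS](Kd' b hb) (tens_suml HT) //.
apply: eq_bigr => j _; rewrite (tensZl HT) // (tens_sumr HT) // scaler_sumr.
apply: eq_bigr => l _; rewrite GE // (tensZr HT) // scalerA; reflexivity.
Qed.
End Span.

Section LinE.
Variables (k : fieldType) (U V : lmodType k) (f : U -> V) (lf : linear f).
Lemma lin_sum m (F : 'I_m -> U) : f (\sum_i F i) = \sum_i f (F i).
Proof. exact: (raddf_sum (mklin lf)). Qed.
Lemma lin0 : f 0 = 0. Proof. exact: (raddf0 (mklin lf)). Qed.
Lemma linD a b : f (a + b) = f a + f b. Proof. exact: (raddfD (mklin lf)). Qed.
Lemma linB a b : f (a - b) = f a - f b. Proof. exact: (raddfB (mklin lf)). Qed.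
Lemma linN a : f (- a) = - f a. Proof. exact: (raddfN (mklin lf)). Qed.
Lemma linZ c a : f (c *: a) = c *: f a. Proof. exact: (linearZ_LR (mklin lf)). Qed.
End LinE.

Lemma lin_mull (k : fieldType) (R : algType k) (z : R) : linear (fun w : R => z * w).
Proof. by move=> c a b; rewrite mulrDr scalerAr. Qed.
Lemma lin_mulr (k : fieldType) (R : algType k) (z : R) : linear (fun w : R => w * z).
Proof. by move=> c a b; rewrite mulrDl scalerAl. Qed.
Lemma lin_comp (k : fieldType) (U V W : lmodType k) (f : U -> V) (g : V -> W) :
  linear f -> linear g -> linear (fun u => g (f u)).
Proof. by move=> lf lg c a b; rewrite lf lg. Qed.

Lemma lin_sumf (k : fieldType) (U V : lmodType k) m (F : 'I_m -> U -> V) :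
  (forall i, linear (F i)) -> linear (fun u => \sum_i F i u).
Proof.
move=> h c a b; rewrite scaler_sumr -big_split; apply: eq_bigr => i _; exact: h.
Qed.
Lemma linL (k : fieldType) (U V : lmodType k) (f : {linear U -> V}) : linear f.
Proof. by move=> c a b; rewrite linearP. Qed.
Lemma scal_vec_inj (k : fieldType) (V : lmodType k) (v : V) (c d : k) :
  v != 0 -> c *: v = d *: v -> c = d.
Proof.
move=> hv h; case: (eqVneq (c - d) 0) => [/eqP|hc]; first by rewrite subr_eq0 => /eqP.
exfalso; move/negP: hv; apply; apply/eqP.
have : (c - d) *: v = 0 by rewrite scalerBl h subrr.
by move/(congr1 (fun w => (c - d)^-1 *: w)); rewrite scalerA mulVf // scale1r scaler0.
Qed.

Lemma lin_scale (k : fieldType) (V : lmodType k) (d : k) : linear (fun v : V => d *: v).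
Proof. by move=> c a b; rewrite scalerDr !scalerA mulrC. Qed.

Lemma algl (k : fieldType) (R : algType k) (c : k) (m : R) : c%:A * m = c *: m.
Proof. by rewrite -scalerAl mul1r. Qed.
Lemma algr (k : fieldType) (R : algType k) (c : k) (m : R) : m * c%:A = c *: m.
Proof. by rewrite -scalerAr mulr1. Qed.

Section Main.
Variables (k : fieldType) (M M1 M2 : algType k) (N : M -> Prop) (E : M -> M) (n : nat)
  (x y : 'I_n -> M) (lam : k) (t1 : M -> M -> M1) (EM : {linear M1 -> M})
  (t2 : M1 -> M1 -> M2) (EM1 : {linear M2 -> M1}).
Hypotheses (HN : is_subalgebra N) (EaddH : forall a b, E (a + b) = E a + E b)
  (ENH : forall m, N (E m))
  (EbimH : forall s m s', N s -> N s' -> E (s * m * s') = s * E m * s')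
  (E1H : E 1 = 1)
  (qb1 : forall m, \sum_(i < n) E (m * x i) * y i = m)
  (qb2 : forall m, \sum_(i < n) x i * E (y i * m) = m)
  (lam0 : lam != 0) (xyH : \sum_(i < n) x i * y i = lam^-1%:A)
  (irrH : forall m, centralizer N m -> exists c : k, m = c%:A)
  (T1 : is_tensor (fun _ => True) N t1)
  (t1mul : forall a b c d, t1 a b * t1 c d = t1 (a * E (b * c)) d)
  (t1one : 1 = \sum_(i < n) t1 (x i) (y i))
  (EMt1 : forall a b, EM (t1 a b) = lam *: (a * b)).

Definition i1 (m : M) : M1 := \sum_(i < n) t1 (m * x i) (y i).
Definition r (i : 'I_n) : M1 := lam^-1 *: t1 (x i) 1.
Definition s (i : 'I_n) : M1 := t1 1 (y i).
Definition i2 (z : M1) : M2 := \sum_(i < n) t2 (z * r i) (s i).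
Definition f1 : M1 := t1 1 1.
Definition E1 : M2 := i2 f1.
Definition e2 : M2 := t2 1 1.
Definition X (m : M) : M2 := i2 (i1 m).
Definition A := centralizer (fun z => exists2 m, N m & z = i1 m).
Definition B := centralizer (fun z => exists m, z = i2 (i1 m)).
Definition C := centralizer (fun z => exists2 m, N m & z = i2 (i1 m)).

Hypotheses (T2 : is_tensor (fun _ => True) (fun z => exists m, z = i1 m) t2)
  (t2mul : forall a b c d, t2 a b * t2 c d = t2 (a * i1 (EM (b * c))) d)
  (t2one : 1 = \sum_(i < n) t2 (r i) (s i))
  (EM1t2 : forall a b, EM1 (t2 a b) = lam *: (a * b)).

Lemma N1 : N 1. Proof. by case: HN. Qed.
Lemma NM a b : N a -> N b -> N (a * b). Proof. by case: HN => _ _ h _; apply: h. Qed.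
Lemma Nalg c : N (c%:A). Proof. by case: HN => h _ _ hs; apply: hs. Qed.

Lemma ElN s0 m : N s0 -> E (s0 * m) = s0 * E m.
Proof. by move=> h; have := EbimH m h N1; rewrite !mulr1. Qed.
Lemma ErN m s0 : N s0 -> E (m * s0) = E m * s0.
Proof. by move=> h; have := EbimH m N1 h; rewrite !mul1r. Qed.
Lemma E_N s0 : N s0 -> E s0 = s0.
Proof. by move=> h; have := ElN 1 h; rewrite mulr1 E1H mulr1. Qed.
Lemma Elin : linear E.
Proof.
move=> c a b; rewrite EaddH -[c *: a]algl ElN; first by rewrite algl.
exact: Nalg.
Qed.

Lemma qb1' : \sum_(i < n) E (x i) * y i = 1.
Proof. by rewrite -[RHS]qb1; apply: eq_bigr => i _; rewrite mul1r. Qed.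
Lemma qb2' : \sum_(i < n) x i * E (y i) = 1.
Proof. by rewrite -[RHS]qb2; apply: eq_bigr => i _; rewrite mulr1. Qed.

Lemma t1lin1 b : linear (t1 ^~ b).
Proof. by move=> c a a'; apply: (tens_lin1 T1). Qed.
Lemma t1lin2 a : linear (t1 a).
Proof. by move=> c b b'; apply: (tens_lin2 T1). Qed.
Lemma t1bal a s0 b : N s0 -> t1 (a * s0) b = t1 a (s0 * b).
Proof. by move=> h; apply: (tens_bal T1). Qed.

Lemma t1suml m (F : 'I_m -> M) b : t1 (\sum_i F i) b = \sum_i t1 (F i) b.
Proof. exact: (lin_sum (t1lin1 b)). Qed.
Lemma t1sumr m (F : 'I_m -> M) a : t1 a (\sum_i F i) = \sum_i t1 a (F i).
Proof. exact: (lin_sum (t1lin2 a)). Qed.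

Lemma i1lin : linear i1.
Proof.
move=> c a b; rewrite /i1 scaler_sumr -big_split; apply: eq_bigr => i _.
by rewrite mulrDl -scalerAl (linD (t1lin1 _)) (linZ (t1lin1 _)).
Qed.

Lemma i1L m a b : i1 m * t1 a b = t1 (m * a) b.
Proof.
rewrite /i1 mulr_suml; under eq_bigr do rewrite t1mul -mulrA.
by rewrite -t1suml -mulr_sumr qb2.
Qed.
Lemma i1R m a b : t1 a b * i1 m = t1 a (b * m).
Proof.
rewrite /i1 mulr_sumr; under eq_bigr do rewrite t1mul t1bal ?ENH //.
by rewrite -t1sumr; congr t1; rewrite -[RHS]qb1; apply: eq_bigr => i _; rewrite mulrA.
Qed.
Lemma i1_1 : i1 1 = 1.
Proof. by rewrite t1one /i1; apply: eq_bigr => i _; rewrite mul1r. Qed.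
Lemma i1M m m' : i1 (m * m') = i1 m * i1 m'.
Proof.
rewrite {2}/i1 mulr_sumr; apply: eq_bigr => i _; by rewrite i1L mulrA.
Qed.
Lemma i1A c : i1 (c%:A) = c%:A.
Proof. by rewrite (linZ i1lin) i1_1. Qed.
Lemma t1_f1 a b : t1 a b = i1 a * f1 * i1 b.
Proof. by rewrite /f1 i1L i1R mulr1 mul1r. Qed.
Lemma f1mf1 m : f1 * i1 m * f1 = i1 (E m) * f1.
Proof. by rewrite /f1 i1R t1mul i1L !mul1r !mulr1. Qed.
Lemma f1N n0 : N n0 -> i1 n0 * f1 = f1 * i1 n0.
Proof. by move=> h; rewrite /f1 i1L i1R mulr1 mul1r -{1}[n0]mul1r t1bal // mulr1. Qed.
Lemma f1f1 : f1 * f1 = f1.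
Proof. by rewrite /f1 t1mul !mul1r E1H. Qed.
Lemma f1_neq0 : f1 != 0.
Proof.
apply/negP => /eqP h; have := @oner_neq0 M1; rewrite t1one big1 ?eqxx //.
by move=> i _; rewrite t1_f1 h mulr0 mul0r.
Qed.

Lemma EMlin : linear EM. Proof. exact: linL. Qed.
Lemma EM1lin : linear EM1. Proof. exact: linL. Qed.

Lemma EMi1L m z : EM (i1 m * z) = m * EM z.
Proof.
apply: (tens_ext T1 (f := fun z => EM (i1 m * z)) (g := fun z => m * EM z)).
- exact: lin_comp (lin_mull _) EMlin.
- exact: lin_comp EMlin (lin_mull _).
by move=> a b _ _; rewrite i1L !EMt1 -scalerAr mulrA.
Qed.
Lemma EMi1R m z : EM (z * i1 m) = EM z * m.
Proof.
apply: (tens_ext T1 (f := fun z => EM (z * i1 m)) (g := fun z => EM z * m)).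
- exact: lin_comp (lin_mulr _) EMlin.
- exact: lin_comp EMlin (lin_mulr _).
by move=> a b _ _; rewrite i1R !EMt1 -scalerAl mulrA.
Qed.
Lemma EM_1 : EM 1 = 1.
Proof.
rewrite t1one (lin_sum EMlin); under eq_bigr do rewrite EMt1.
by rewrite -scaler_sumr xyH scalerA mulfV // scale1r.
Qed.
Lemma EMi1 m : EM (i1 m) = m.
Proof. by rewrite -[i1 m]mulr1 EMi1L EM_1 mulr1. Qed.
Lemma EMf1 : EM f1 = lam%:A.
Proof. by rewrite /f1 EMt1 mulr1. Qed.

Lemma qbM1 z : \sum_(i < n) r i * i1 (EM (s i * z)) = z.
Proof.
apply: (tens_ext T1 (f := fun z => \sum_(i < n) r i * i1 (EM (s i * z))) (g := fun z => z)) => //.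
- apply: lin_sumf => i.
  exact: lin_comp (lin_comp (lin_comp (lin_mull _) EMlin) i1lin) (lin_mull _).
move=> a b _ _; rewrite -[in RHS](qb2 a) t1suml; apply: eq_bigr => i _.
rewrite /r /s t1mul EMt1 (linZ i1lin) -scalerAl -scalerAr scalerA mulVf // scale1r.
by rewrite !mul1r i1R mul1r t1bal ?ENH.
Qed.
Lemma qbM2 z : \sum_(i < n) i1 (EM (z * r i)) * s i = z.
Proof.
apply: (tens_ext T1 (f := fun z => \sum_(i < n) i1 (EM (z * r i)) * s i) (g := fun z => z)) => //.
- apply: lin_sumf => i.
  exact: lin_comp (lin_comp (lin_comp (lin_mulr _) EMlin) i1lin) (lin_mulr _).
move=> a b _ _; rewrite -[in RHS](qb1 b) t1sumr; apply: eq_bigr => i _.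
rewrite /r /s -scalerAr t1mul (linZ EMlin) EMt1 scalerA mulVf // scale1r.
by rewrite mulr1 i1L mulr1 t1bal ?ENH.
Qed.

Lemma nu_ex : exists g : {linear M1 -> M}, forall a b, True -> True -> g (t1 a b) = E a * b.
Proof.
apply: (tens_lift T1).
- move=> c a a' b _ _ _; split; first by rewrite Elin mulrDl scalerAl.
  by rewrite mulrDr scalerAr.
- by move=> s0 a b h _ _ _ _; rewrite ErN // mulrA.
Qed.
Definition nu : M1 -> M := sval (constructive_indefinite_description _ nu_ex).
Lemma nulin : linear nu.
Proof. rewrite /nu; case: constructive_indefinite_description => g _ /=; exact: linL. Qed.
Lemma nuE a b : nu (t1 a b) = E a * b.
Proof. rewrite /nu; case: constructive_indefinite_description => g /= -> //. Qed.

Lemma nu'_ex : exists g : {linear M1 -> M}, forall a b, True -> True -> g (t1 a b) = a * E b.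
Proof.
apply: (tens_lift T1).
- move=> c a a' b _ _ _; split; first by rewrite mulrDl scalerAl.
  by rewrite Elin mulrDr scalerAr.
- by move=> s0 a b h _ _ _ _; rewrite ElN // mulrA.
Qed.
Definition nu' : M1 -> M := sval (constructive_indefinite_description _ nu'_ex).
Lemma nu'lin : linear nu'.
Proof. rewrite /nu'; case: constructive_indefinite_description => g _ /=; exact: linL. Qed.
Lemma nu'E a b : nu' (t1 a b) = a * E b.
Proof. rewrite /nu'; case: constructive_indefinite_description => g /= -> //. Qed.

Lemma f1nu z : f1 * z = f1 * i1 (nu z).
Proof.
apply: (tens_ext T1 (f := fun z => f1 * z) (g := fun z => f1 * i1 (nu z))).
- exact: lin_mull.
- exact: lin_comp nulin (lin_comp i1lin (lin_mull _)).
by move=> a b _ _; rewrite nuE /f1 t1mul i1R !mul1r -[E a]mul1r t1bal ?ENH // mul1r.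
Qed.
Lemma nu'f1 z : z * f1 = i1 (nu' z) * f1.
Proof.
apply: (tens_ext T1 (f := fun z => z * f1) (g := fun z => i1 (nu' z) * f1)).
- exact: lin_mulr.
- exact: lin_comp nu'lin (lin_comp i1lin (lin_mulr _)).
by move=> a b _ _; rewrite nu'E /f1 t1mul i1L !mulr1.
Qed.
Lemma nu_L n0 z : N n0 -> nu (i1 n0 * z) = n0 * nu z.
Proof.
move=> h; apply: (tens_ext T1 (f := fun z => nu (i1 n0 * z)) (g := fun z => n0 * nu z)).
- exact: lin_comp (lin_mull _) nulin.
- exact: lin_comp nulin (lin_mull _).
by move=> a b _ _; rewrite i1L !nuE ElN // mulrA.
Qed.
Lemma nu_R m z : nu (z * i1 m) = nu z * m.
Proof.
apply: (tens_ext T1 (f := fun z => nu (z * i1 m)) (g := fun z => nu z * m)).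
- exact: lin_comp (lin_mulr _) nulin.
- exact: lin_comp nulin (lin_mulr _).
by move=> a b _ _; rewrite i1R !nuE mulrA.
Qed.
Lemma nu'_L m z : nu' (i1 m * z) = m * nu' z.
Proof.
apply: (tens_ext T1 (f := fun z => nu' (i1 m * z)) (g := fun z => m * nu' z)).
- exact: lin_comp (lin_mull _) nu'lin.
- exact: lin_comp nu'lin (lin_mull _).
by move=> a b _ _; rewrite i1L !nu'E mulrA.
Qed.
Lemma nu'_R n0 z : N n0 -> nu' (z * i1 n0) = nu' z * n0.
Proof.
move=> h; apply: (tens_ext T1 (f := fun z => nu' (z * i1 n0)) (g := fun z => nu' z * n0)).
- exact: lin_comp (lin_mulr _) nu'lin.
- exact: lin_comp nu'lin (lin_mulr _).
by move=> a b _ _; rewrite i1R !nu'E ErN // mulrA.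
Qed.

Lemma A_i1N a n0 : A a -> N n0 -> a * i1 n0 = i1 n0 * a.
Proof. by move=> ha h; apply: ha; exists n0. Qed.

Lemma f1A a : A a -> exists c : k, f1 * a = c *: f1 /\ a * f1 = c *: f1.
Proof.
move=> ha.
have [c hc] : exists c : k, nu a = c%:A.
  apply: irrH => s0 h; rewrite -nu_R -nu_L // A_i1N //.
have [c' hc'] : exists c : k, nu' a = c%:A.
  apply: irrH => s0 h; rewrite -nu'_R // -nu'_L A_i1N //.
have e1 : f1 * a = c *: f1 by rewrite f1nu hc i1A algr.
have e2 : a * f1 = c' *: f1 by rewrite nu'f1 hc' i1A algl.
have : c *: f1 = c' *: f1.
  by rewrite -[in LHS]f1f1 scalerAl -e1 -mulrA e2 -scalerAr f1f1.
move/(scal_vec_inj f1_neq0) => cc; exists c; split => //; by rewrite cc.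
Qed.

Lemma t2lin1 b : linear (t2 ^~ b).
Proof. by move=> c a a'; apply: (tens_lin1 T2). Qed.
Lemma t2lin2 a : linear (t2 a).
Proof. by move=> c b b'; apply: (tens_lin2 T2). Qed.
Lemma t2bal a m b : t2 (a * i1 m) b = t2 a (i1 m * b).
Proof. by apply: (tens_bal T2) => //; exists m. Qed.
Lemma t2suml m (F : 'I_m -> M1) b : t2 (\sum_i F i) b = \sum_i t2 (F i) b.
Proof. exact: (lin_sum (t2lin1 b)). Qed.
Lemma t2sumr m (F : 'I_m -> M1) a : t2 a (\sum_i F i) = \sum_i t2 a (F i).
Proof. exact: (lin_sum (t2lin2 a)). Qed.

Lemma i2lin : linear i2.
Proof.
move=> c a b; rewrite /i2 scaler_sumr -big_split; apply: eq_bigr => i _.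
by rewrite mulrDl -scalerAl (linD (t2lin1 _)) (linZ (t2lin1 _)).
Qed.
Lemma i2L z a b : i2 z * t2 a b = t2 (z * a) b.
Proof.
rewrite /i2 mulr_suml; under eq_bigr do rewrite t2mul -mulrA.
by rewrite -t2suml -mulr_sumr qbM1.
Qed.
Lemma i2R z a b : t2 a b * i2 z = t2 a (b * z).
Proof.
rewrite /i2 mulr_sumr; under eq_bigr do rewrite t2mul t2bal.
by rewrite -t2sumr; congr t2; rewrite -[RHS]qbM2; apply: eq_bigr => i _; rewrite mulrA.
Qed.
Lemma i2_1 : i2 1 = 1.
Proof. by rewrite t2one /i2; apply: eq_bigr => i _; rewrite mul1r. Qed.
Lemma i2M z w : i2 (z * w) = i2 z * i2 w.
Proof. rewrite {2}/i2 mulr_sumr; apply: eq_bigr => i _; by rewrite i2L mulrA. Qed.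
Lemma i2A c : i2 (c%:A) = c%:A.
Proof. by rewrite (linZ i2lin) i2_1. Qed.
Lemma XM m m' : X (m * m') = X m * X m'.
Proof. by rewrite /X i1M i2M. Qed.
Lemma Xlin : linear X.
Proof. exact: lin_comp i1lin i2lin. Qed.
Lemma t2_e2 a b : t2 a b = i2 a * e2 * i2 b.
Proof. by rewrite /e2 i2L i2R mulr1 mul1r. Qed.
Lemma e2me2 z : e2 * i2 z * e2 = X (EM z) * e2.
Proof. by rewrite /e2 /X i2R t2mul i2L !mul1r !mulr1. Qed.
Lemma e2X m : X m * e2 = e2 * X m.
Proof. by rewrite /e2 /X i2L i2R mulr1 mul1r -{1}[i1 m]mul1r t2bal mulr1. Qed.
Lemma e2e2 : e2 * e2 = e2.
Proof. by rewrite /e2 t2mul !mul1r EM_1 i1_1. Qed.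

Lemma EM1L u z : EM1 (i2 u * z) = u * EM1 z.
Proof.
apply: (tens_ext T2 (f := fun z => EM1 (i2 u * z)) (g := fun z => u * EM1 z)).
- exact: lin_comp (lin_mull _) EM1lin.
- exact: lin_comp EM1lin (lin_mull _).
by move=> a b _ _; rewrite i2L !EM1t2 -scalerAr mulrA.
Qed.
Lemma EM1R u z : EM1 (z * i2 u) = EM1 z * u.
Proof.
apply: (tens_ext T2 (f := fun z => EM1 (z * i2 u)) (g := fun z => EM1 z * u)).
- exact: lin_comp (lin_mulr _) EM1lin.
- exact: lin_comp EM1lin (lin_mulr _).
by move=> a b _ _; rewrite i2R !EM1t2 -scalerAl mulrA.
Qed.
Lemma EM1e2 : EM1 e2 = lam%:A.
Proof. by rewrite /e2 EM1t2 mulr1. Qed.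

Lemma PDn x0 : x0 * e2 = i2 (lam^-1 *: EM1 (x0 * e2)) * e2.
Proof.
apply: (tens_ext T2 (f := fun x0 => x0 * e2) (g := fun x0 => i2 (lam^-1 *: EM1 (x0 * e2)) * e2)).
- exact: lin_mulr.
- apply: lin_comp (lin_comp (lin_comp (lin_mulr _) EM1lin) _) (lin_comp i2lin (lin_mulr _)).
  by move=> c a b; rewrite scalerDr !scalerA mulrC.
move=> a b _ _; rewrite /e2 t2mul EM1t2 scalerA mulVf // scale1r i2L !mulr1.
by [].
Qed.
Lemma PDn' x0 : e2 * x0 = e2 * i2 (lam^-1 *: EM1 (e2 * x0)).
Proof.
apply: (tens_ext T2 (f := fun x0 => e2 * x0) (g := fun x0 => e2 * i2 (lam^-1 *: EM1 (e2 * x0)))).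
- exact: lin_mull.
- apply: lin_comp (lin_comp (lin_comp (lin_mull _) EM1lin) _) (lin_comp i2lin (lin_mull _)).
  by move=> c a b; rewrite scalerDr !scalerA mulrC.
move=> a b _ _; rewrite /e2 t2mul EM1t2 scalerA mulVf // scale1r i2R !mul1r.
by rewrite -{1}[i1 _]mul1r t2bal.
Qed.

Lemma E1E1 : E1 * E1 = E1.
Proof. by rewrite /E1 -i2M f1f1. Qed.
Lemma E1X n0 : N n0 -> X n0 * E1 = E1 * X n0.
Proof. by move=> h; rewrite /E1 /X -!i2M f1N. Qed.
Lemma E1XE1 m : E1 * X m * E1 = X (E m) * E1.
Proof. by rewrite /E1 /X -!i2M f1mf1. Qed.
Lemma Jones1 : E1 * e2 * E1 = lam *: E1.
Proof.
rewrite -t2_e2 /E1 /i2 scaler_sumr.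
transitivity (t2 f1 (\sum_(i < n) t1 (E (x i)) (y i))).
  congr t2; rewrite /f1 -{2}qb1' t1sumr; apply: eq_bigr => i _.
  by rewrite -t1bal ?ENH // mul1r.
rewrite t2sumr; apply: eq_bigr => i _.
rewrite /r -scalerAr (linZ (t2lin1 _)) scalerA mulfV // scale1r.
rewrite {2}/f1 t1mul !mul1r.
have -> : t1 (E (x i)) 1 = f1 * i1 (E (x i)).
  by rewrite /f1 i1R mul1r -{1}[E (x i)]mul1r t1bal ?ENH // mulr1.
by rewrite t2bal /s i1L mulr1.
Qed.
Lemma Jones2 : e2 * E1 * e2 = lam *: e2.
Proof. by rewrite /E1 e2me2 EMf1 /X i1A i2A algl. Qed.

Definition Bel (G : M2) : M2 := \sum_(i < n) X (x i) * G * X (y i).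
Lemma Bel_lin : linear Bel.
Proof. apply: lin_sumf => i; exact: lin_comp (lin_mull _) (lin_mulr _). Qed.

Lemma Bcl c b b' : B b -> B b' -> B (c *: b + b').
Proof.
move=> hb hb' z hz; rewrite mulrDl mulrDr -scalerAl -scalerAr hb // hb' //.
Qed.
Lemma B0 : B 0. Proof. by move=> z _; rewrite mul0r mulr0. Qed.
Lemma BX b m : B b -> b * X m = X m * b.
Proof. by move=> hb; apply: hb; exists m. Qed.
Lemma BM b b' : B b -> B b' -> B (b * b').
Proof. by move=> hb hb' z hz; rewrite -mulrA hb' // !mulrA hb. Qed.

Lemma Bel_B G : (forall n0, N n0 -> X n0 * G = G * X n0) -> B (Bel G).
Proof.
move=> hG.
have [Ga GaE] : exists g : {linear M1 -> M2}, forall a b, True -> True -> g (t1 a b) = X a * G * X b.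
  apply: (tens_lift T1).
  - move=> c a a' b _ _ _; split; first by rewrite (linD Xlin) (linZ Xlin) mulrDl mulrDl -!scalerAl.
    by rewrite (linD Xlin) (linZ Xlin) mulrDr -scalerAr.
  - by move=> s0 a b h _ _ _ _; rewrite !XM -(mulrA (X a)) hG // !mulrA.
have GaL m z : Ga (i1 m * z) = X m * Ga z.
  apply: (tens_ext T1 (f := fun z => Ga (i1 m * z)) (g := fun z => X m * Ga z)).
  - exact: lin_comp (lin_mull _) (linL Ga).
  - exact: lin_comp (linL Ga) (lin_mull _).
  by move=> a b _ _; rewrite i1L !GaE // XM !mulrA.
have GaR m z : Ga (z * i1 m) = Ga z * X m.
  apply: (tens_ext T1 (f := fun z => Ga (z * i1 m)) (g := fun z => Ga z * X m)).
  - exact: lin_comp (lin_mulr _) (linL Ga).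
  - exact: lin_comp (linL Ga) (lin_mulr _).
  by move=> a b _ _; rewrite i1R !GaE // XM !mulrA.
have -> : Bel G = Ga 1.
  by rewrite t1one (lin_sum (linL Ga)); apply: eq_bigr => i _; rewrite GaE.
move=> z [m ->]; rewrite -/(X m) -GaR mul1r -[i1 m]mulr1 GaL //.
Qed.

Lemma XA a n0 : A a -> N n0 -> X n0 * i2 a = i2 a * X n0.
Proof. by move=> ha h; rewrite /X -!i2M A_i1N. Qed.
Lemma XC3 (u v w : M2) n0 : X n0 * u = u * X n0 -> X n0 * v = v * X n0 -> X n0 * w = w * X n0 ->
  X n0 * (u * v * w) = u * v * w * X n0.
Proof. by move=> hu hv hw; rewrite !mulrA hu -(mulrA u) hv mulrA -mulrA hw mulrA. Qed.
Lemma e2X' m : e2 * X m = X m * e2. Proof. by rewrite e2X. Qed.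

Definition ba (a : M1) : M2 := lam^-1 *: Bel (i2 a * e2 * E1).
Definition bb (a : M1) : M2 := lam^-1 *: Bel (E1 * e2 * i2 a).
Definition al (b : M2) : M1 := lam^-1 *: EM1 (b * E1 * e2).
Definition al' (b : M2) : M1 := lam^-1 *: EM1 (e2 * E1 * b).

Lemma ba_lin : linear ba.
Proof.
exact: lin_comp (lin_comp (lin_comp i2lin (lin_mulr _)) (lin_mulr _)) (lin_comp Bel_lin (lin_scale lam^-1)).
Qed.
Lemma bb_lin : linear bb.
Proof.
exact: lin_comp (lin_comp i2lin (lin_mull _)) (lin_comp Bel_lin (lin_scale lam^-1)).
Qed.
Lemma al_lin : linear al.
Proof.
exact: lin_comp (lin_comp (lin_mulr _) (lin_mulr _)) (lin_comp EM1lin (lin_scale lam^-1)).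
Qed.
Lemma al'_lin : linear al'.
Proof.
exact: lin_comp (lin_mull _) (lin_comp EM1lin (lin_scale lam^-1)).
Qed.

Lemma ba_B a : A a -> B (ba a).
Proof.
move=> ha; rewrite /ba -[_ *: _]addr0; apply: Bcl B0; apply: Bel_B => n0 h.
apply: XC3; [exact: XA | exact: e2X | exact: E1X].
Qed.
Lemma bb_B a : A a -> B (bb a).
Proof.
move=> ha; rewrite /bb -[_ *: _]addr0; apply: Bcl B0; apply: Bel_B => n0 h.
apply: XC3; [exact: E1X | exact: e2X | exact: XA].
Qed.

Lemma X1 : X 1 = 1. Proof. by rewrite /X i1_1 i2_1. Qed.
Lemma Xsum m (F : 'I_m -> M) : X (\sum_i F i) = \sum_i X (F i).
Proof. exact: (lin_sum Xlin). Qed.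

Lemma ba_E1 a : A a -> ba a * E1 = lam^-1 *: (i2 a * e2 * E1).
Proof.
move=> ha; rewrite /ba -scalerAl /Bel mulr_suml; congr (_ *: _).
transitivity (\sum_(i < n) X (x i * E (y i)) * (i2 a * e2 * E1)); last first.
  by rewrite -mulr_suml -Xsum qb2' X1 mul1r.
apply: eq_bigr => i _.
rewrite -!mulrA [E1 * (X _ * E1)]mulrA E1XE1 [e2 * (X _ * E1)]mulrA -e2X.
rewrite -mulrA [i2 a * (X _ * _)]mulrA -XA ?ENH // XM !mulrA.
by [].
Qed.
Lemma bb_E1 a : A a -> E1 * bb a = lam^-1 *: (E1 * e2 * i2 a).
Proof.
move=> ha; rewrite /bb -scalerAr /Bel mulr_sumr; congr (_ *: _).
transitivity (\sum_(i < n) (E1 * e2 * i2 a) * X (E (x i) * y i)); last first.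
  by rewrite -mulr_sumr -Xsum qb1' X1 mulr1.
apply: eq_bigr => i _.
rewrite !mulrA E1XE1 E1X ?ENH // -!mulrA [X _ * (e2 * _)]mulrA e2X -mulrA [X _ * (i2 a * _)]mulrA XA ?ENH //.
by rewrite -!mulrA XM.
Qed.
Lemma ba_bb a a' : A a -> A a' -> ba a * E1 * bb a' = lam^-1 *: t2 a a'.
Proof.
move=> ha ha'; rewrite -E1E1 mulrA ba_E1 // -mulrA bb_E1 // -scalerAl -scalerAr scalerA.
rewrite t2_e2 -[e2 in RHS]e2e2.
have -> : i2 a * e2 * E1 * (E1 * e2 * i2 a') = i2 a * (e2 * E1 * e2) * i2 a'.
  by rewrite -!mulrA; congr (_ * (_ * _)); rewrite mulrA E1E1.
rewrite Jones2 -scalerAr -scalerAl scalerA divfK // e2e2.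
reflexivity.
Qed.

Lemma al_A b : B b -> A (al b).
Proof.
move=> hb z [n0 h ->]; rewrite /al -scalerAl -scalerAr -EM1R -EM1L; congr (_ *: EM1 _).
rewrite -/(X n0) -!mulrA e2X' [E1 * (X n0 * e2)]mulrA -E1X // !mulrA BX // !mulrA.
Qed.
Lemma al'_A b : B b -> A (al' b).
Proof.
move=> hb z [n0 h ->]; rewrite /al' -scalerAl -scalerAr -EM1R -EM1L; congr (_ *: EM1 _).
rewrite -/(X n0) -!mulrA BX // [E1 * (X n0 * b)]mulrA -E1X // -!mulrA [e2 * (X n0 * _)]mulrA -e2X -!mulrA. reflexivity.
Qed.

Lemma i2r i : i2 (r i) = lam^-1 *: (X (x i) * E1).
Proof. by rewrite /r (linZ i2lin) t1_f1 i1_1 mulr1 i2M. Qed.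
Lemma i2s i : i2 (s i) = E1 * X (y i).
Proof. by rewrite /s t1_f1 i1_1 mul1r i2M. Qed.

Lemma b_al b : B b -> b = ba (al b).
Proof.
move=> hb; rewrite -[LHS]mulr1 t2one mulr_sumr /ba /Bel scaler_sumr; apply: eq_bigr => i _.
rewrite t2_e2 i2r i2s -!scalerAl -scalerAr; congr (_ *: _).
rewrite !mulrA (BX _ hb) -(mulrA (X (x i)) b) -(mulrA (X (x i)) (b * E1)) PDn -/(al b).
by rewrite !mulrA.
Qed.
Lemma b_al' b : B b -> b = bb (al' b).
Proof.
move=> hb; rewrite -[LHS]mul1r t2one mulr_suml /bb /Bel scaler_sumr; apply: eq_bigr => i _.
rewrite t2_e2 i2r i2s -!scalerAl; congr (_ *: _).
rewrite -!mulrA -(BX _ hb) [E1 * (b * _)]mulrA [e2 * (E1 * b * _)]mulrA PDn' /al' !mulrA.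
reflexivity.

Qed.

Lemma EM1_e2 u v : EM1 (i2 u * e2 * i2 v) = lam *: (u * v).
Proof. by rewrite EM1R EM1L EM1e2 algr -scalerAl. Qed.

Lemma EM1ba a c : A a -> a * f1 = c *: f1 -> EM1 (ba a) = c%:A.
Proof.
move=> ha hc; rewrite /ba (linZ EM1lin) /Bel (lin_sum EM1lin).
have -> : \sum_(i < n) EM1 (X (x i) * (i2 a * e2 * E1) * X (y i))
        = \sum_(i < n) lam *: (c *: t1 (x i) (y i)).
  apply: eq_bigr => i _; rewrite /X /E1 !mulrA -i2M -mulrA -i2M EM1_e2.
  by rewrite mulrA -(mulrA _ a) hc -scalerAr -scalerAl -t1_f1.
rewrite scaler_sumr (eq_bigr (fun i => c *: t1 (x i) (y i))); last by move=> i _; rewrite scalerA mulVf // scale1r.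
by rewrite [in RHS]t1one scaler_sumr.
Qed.

Lemma e1be1 b : B b -> E1 * b * E1 = i2 (EM1 b) * E1.
Proof.
move=> hb; have ha := al_A hb; rewrite (b_al hb).
case: (f1A ha) => c [hc1 hc2].
rewrite (EM1ba ha hc2) i2A algl -mulrA ba_E1 // -scalerAr !mulrA.
have -> : E1 * i2 (al b) = c *: E1 by rewrite /E1 -i2M hc1 (linZ i2lin).
rewrite -!scalerAl Jones1 !scalerA mulrC mulrA mulfV // mul1r.
reflexivity.
Qed.

Lemma Acl c z w : A z -> A w -> A (c *: z + w).
Proof. by move=> hz hw u hu; rewrite mulrDl mulrDr -scalerAl -scalerAr hz // hw. Qed.
Lemma A0 : A 0. Proof. by move=> u _; rewrite mul0r mulr0. Qed.
Lemma AM z w : A z -> A w -> A (z * w).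
Proof. by move=> hz hw u hu; rewrite -mulrA hw // !mulrA hz. Qed.
Lemma A_EM z : A z -> A (i1 (EM z)).
Proof.
move=> hz u [n0 h ->]; rewrite -!i1M -EMi1R -EMi1L; congr (i1 (EM _)).
by rewrite A_i1N.
Qed.
Lemma B_EM1 b : B b -> B (i2 (EM1 b)).
Proof.
move=> hb u [m ->]; rewrite -!i2M -EM1R -EM1L; congr (i2 (EM1 _)).
exact: BX.
Qed.

Definition eps (m : M) : k :=
  match excluded_middle_informative (exists c : k, m = c%:A) with
  | left h => sval (constructive_indefinite_description _ h)
  | right _ => 0 end.
Lemma epsE c : eps (c%:A) = c.
Proof.
rewrite /eps; case: excluded_middle_informative => [h|[]]; last by exists c.
by case: constructive_indefinite_description => d /= /scalA_injE.
Qed.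

Section Depth.
Variables (p : nat) (aa : 'I_p -> M1).
Hypotheses (Haa : forall j, A (aa j))
  (Hsp : forall z, exists mm : 'I_p -> M, z = \sum_(j < p) aa j * i1 (mm j))
  (Hun : forall mm : 'I_p -> M, \sum_(j < p) aa j * i1 (mm j) = 0 -> forall j, mm j = 0).

Definition pi (z : M1) : 'I_p -> M := sval (constructive_indefinite_description _ (Hsp z)).
Lemma piE z : z = \sum_(j < p) aa j * i1 (pi z j).
Proof. by rewrite /pi; case: constructive_indefinite_description. Qed.
Lemma piU z mm : z = \sum_(j < p) aa j * i1 (mm j) -> forall j, pi z j = mm j.
Proof.
move=> hz j; apply/eqP; rewrite -subr_eq0; apply/eqP.
suff h : \sum_(i < p) aa i * i1 (pi z i - mm i) = 0 by exact: (Hun h j).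
under eq_bigr do rewrite (linB i1lin) mulrBr.
by rewrite sumrB -piE -hz subrr.
Qed.
Lemma pi_lin j c z w : pi (c *: z + w) j = c *: pi z j + pi w j.
Proof.
apply: (piU (mm := fun j => c *: pi z j + pi w j)); rewrite {1}(piE z) {1}(piE w) scaler_sumr -big_split; apply: eq_bigr => i _.
by rewrite i1lin mulrDr scalerAr.
Qed.
Lemma pi_R z m j : pi (z * i1 m) j = pi z j * m.
Proof.
apply: (piU (mm := fun j => pi z j * m)); rewrite {1}(piE z) mulr_suml; apply: eq_bigr => i _.
by rewrite -mulrA i1M.
Qed.
Lemma pi_LN z n0 j : N n0 -> pi (i1 n0 * z) j = n0 * pi z j.
Proof.
move=> h; apply: (piU (mm := fun j => n0 * pi z j)); rewrite {1}(piE z) mulr_sumr; apply: eq_bigr => i _.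
by rewrite mulrA -A_i1N // -mulrA i1M.
Qed.

Lemma Gm_ex j : exists g : {linear M2 -> M1}, forall u v, True -> True -> g (t2 u v) = i1 (pi u j) * v.
Proof.
apply: (tens_lift T2).
- move=> c u u' v _ _ _; split; first by rewrite pi_lin i1lin mulrDl scalerAl.
  by rewrite mulrDr scalerAr.
- by move=> s0 u v [m ->] _ _ _ _; rewrite pi_R i1M mulrA.
Qed.
Definition Gm j : M2 -> M1 := sval (constructive_indefinite_description _ (Gm_ex j)).
Lemma Gm_lin j : linear (Gm j).
Proof. rewrite /Gm; case: constructive_indefinite_description => g _ /=; exact: linL. Qed.
Lemma GmE j u v : Gm j (t2 u v) = i1 (pi u j) * v.
Proof. rewrite /Gm; case: constructive_indefinite_description => g /= -> //. Qed.

Lemma pi_aa l j : pi (aa l) j = (j == l)%:R.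
Proof.
apply: (piU (mm := fun j => (j == l)%:R)); rewrite (bigD1 l) //= eqxx i1_1 mulr1 big1 ?addr0 //.
by move=> i /negbTE ->; rewrite (lin0 i1lin) mulr0.
Qed.

Lemma decM2 z : z = \sum_(j < p) t2 (aa j) (Gm j z).
Proof.
apply: (tens_ext T2 (f := fun z => z) (g := fun z => \sum_(j < p) t2 (aa j) (Gm j z))) => //.
- apply: lin_sumf => j; exact: lin_comp (Gm_lin j) (t2lin2 _).
move=> u v _ _; rewrite {1}(piE u) t2suml; apply: eq_bigr => j _.
by rewrite GmE t2bal.
Qed.
Lemma Gsum l (w : 'I_p -> M1) : Gm l (\sum_(j < p) t2 (aa j) (w j)) = w l.
Proof.
rewrite (lin_sum (Gm_lin l)) (bigD1 l) //= GmE pi_aa eqxx i1_1 mul1r big1 ?addr0 //.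
by move=> i /negbTE hi; rewrite GmE pi_aa eq_sym hi (lin0 i1lin) mul0r.
Qed.

Lemma C_dec c : C c -> exists w : 'I_p -> M1, (forall j, A (w j)) /\ c = \sum_(j < p) t2 (aa j) (w j).
Proof.
move=> hc; exists (fun j => Gm j c); split; last exact: decM2.
move=> l u [n0 h ->].
have e : c * X n0 = X n0 * c by apply: hc; exists n0.
have := congr1 (Gm l) e; rewrite {1 2}(decM2 c) mulr_suml mulr_sumr.
under eq_bigr do rewrite /X i2R.
under [in RHS]eq_bigr do rewrite /X i2L -A_i1N // t2bal.
by rewrite !Gsum.
Qed.

Definition kap (j : 'I_p) (z : M1) : k := eps (pi z j).
Lemma kapE z j : A z -> pi z j = (kap j z)%:A.
Proof.
move=> hz; have [c hc] : exists c : k, pi z j = c%:A.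
  apply: irrH => s0 h; rewrite -pi_R -pi_LN // A_i1N //.
by rewrite /kap hc epsE.
Qed.
Lemma kap_lin j c z w : A z -> A w -> kap j (c *: z + w) = c * kap j z + kap j w.
Proof.
move=> hz hw; rewrite /kap pi_lin (kapE j hz) (kapE j hw).
by rewrite !epsE scalerA -scalerDl epsE.
Qed.
Lemma A_dec z : A z -> z = \sum_(j < p) kap j z *: aa j.
Proof.
move=> hz; rewrite {1}(piE z); apply: eq_bigr => j _.
by rewrite (kapE j hz) i1A algr.
Qed.

Lemma indep2 (D : 'I_p -> 'I_p -> k) :
  \sum_(j < p) \sum_(l < p) D j l *: t2 (aa j) (aa l) = 0 -> forall j l, D j l = 0.
Proof.
move=> h j l.
have h' : \sum_(j < p) t2 (aa j) (\sum_(l < p) D j l *: aa l) = 0.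
  rewrite -[RHS]h; apply: eq_bigr => i _; rewrite t2sumr; apply: eq_bigr => m _.
  by rewrite (linZ (t2lin2 _)).
have := congr1 (Gm j) h'; rewrite Gsum (lin0 (Gm_lin j)) => h2.
have h3 : \sum_(m < p) aa m * i1 ((D j m)%:A) = 0.
  by rewrite -[RHS]h2; apply: eq_bigr => m _; rewrite i1A algr.
exact: (scalA_inj (Hun h3 l)).
Qed.

Lemma C_t2 u v : A u -> A v -> C (t2 u v).
Proof.
move=> hu hv z [n0 h ->]; rewrite t2_e2; symmetry.
apply: XC3; [exact: XA | exact: e2X | exact: XA].
Qed.
Lemma C_sum m (F : 'I_m -> M2) : (forall i, C (F i)) -> C (\sum_i F i).
Proof.
move=> hF z hz; rewrite mulr_suml mulr_sumr; apply: eq_bigr => i _; exact: hF.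
Qed.

Theorem part1 c : C c <-> exists (q : nat) (u v : 'I_q -> M1),
   (forall j, A (u j) /\ A (v j)) /\ c = \sum_(j < q) i2 (u j) * e2 * i2 (v j).
Proof.
split.
  move=> /C_dec [w [hw ->]]; exists p, aa, w; split; first by move=> j; split.
  by apply: eq_bigr => j _; rewrite t2_e2.
move=> [q [u [v [huv ->]]]]; apply: C_sum => j; rewrite -t2_e2.
by case: (huv j) => *; apply: C_t2.
Qed.

Lemma phi_lift (Y : Type) (T : lmodType k) (tau : Y -> Y -> T) (phi : {linear T -> M2}) m
  (F : 'I_m -> 'I_m -> k) u v :
  phi (\sum_(j < m) \sum_(l < m) F j l *: tau (u j) (v l))
  = \sum_(j < m) \sum_(l < m) F j l *: phi (tau (u j) (v l)).
Proof.
rewrite raddf_sum; apply: eq_bigr => j _; rewrite raddf_sum; apply: eq_bigr => l _.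
exact: (linZ (linL phi)).
Qed.

Theorem part2 (T : lmodType k) (tau : M1 -> M1 -> T) : is_tensor A (fun _ => False) tau ->
  exists phi : {linear T -> M2},
    [/\ injective phi, (forall c, C c <-> exists t, c = phi t) &
        forall a1 a2 a3 a4, A a1 -> A a2 -> A a3 -> A a4 ->
          phi (tau a1 a2) * phi (tau a3 a4) = phi (tau (a1 * i1 (EM (a2 * a3))) a4)].
Proof.
move=> HT.
have [phi phiE] : exists phi : {linear T -> M2}, forall a b, A a -> A b -> phi (tau a b) = t2 a b.
  apply: (tens_lift HT) => //.
  by move=> c a a' b _ _ _; split; [exact: t2lin1 | exact: t2lin2].
exists phi; split.
- move=> t t' e.
  have [D hD] := tens_span HT A0 Acl Haa Haa kap_lin kap_lin A_dec A_dec (t - t').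
  have h0 : phi (t - t') = 0 by rewrite linearB /= e subrr.
  move: h0; rewrite hD phi_lift.
  have -> : \sum_(j < p) \sum_(l < p) D j l *: phi (tau (aa j) (aa l))
          = \sum_(j < p) \sum_(l < p) D j l *: t2 (aa j) (aa l).
    by apply: eq_bigr => j _; apply: eq_bigr => l _; rewrite phiE.
  move/indep2 => hD0; apply/eqP; rewrite -subr_eq0 hD; apply/eqP.
  by rewrite big1 // => j _; rewrite big1 // => l _; rewrite hD0 scale0r.
- move=> c; split.
    move=> /C_dec [w [hw ->]]; exists (\sum_(j < p) tau (aa j) (w j)).
    by rewrite raddf_sum; apply: eq_bigr => j _; apply/esym/phiE.
  move=> [t ->] z [n0 h ->].
  apply: (tens_ext HT (f := fun t => phi t * X n0) (g := fun t => X n0 * phi t)).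
  + exact: lin_comp (linL phi) (lin_mulr _).
  + exact: lin_comp (linL phi) (lin_mull _).
  by move=> a b ha hb; rewrite phiE //; apply: C_t2 => //; exists n0.
- move=> a1 a2 a3 a4 h1 h2 h3 h4; rewrite !phiE // ?t2mul //.
  exact: AM h1 (A_EM (AM h2 h3)).
Qed.

Lemma C_bE1b b b' : B b -> B b' -> C (b * E1 * b').
Proof.
move=> hb hb' z [n0 h ->]; symmetry.
apply: XC3; [exact: (esym (BX _ hb)) | exact: E1X | exact: (esym (BX _ hb'))].
Qed.

Theorem part3 c : C c <-> exists (q : nat) (b b' : 'I_q -> M2),
   (forall j, B (b j) /\ B (b' j)) /\ c = \sum_(j < q) b j * E1 * b' j.
Proof.
split.
  move=> /C_dec [w [hw ->]]; exists p, (fun j => lam *: ba (aa j)), (fun j => bb (w j)).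
  split.
    move=> j; split; last exact: bb_B.
    by rewrite -[_ *: _]addr0; apply: Bcl B0; apply: ba_B.
  apply: eq_bigr => j _; rewrite -scalerAl -scalerAl ba_bb // scalerA mulfV // scale1r.
  by [].
move=> [q [b [b' [hbb ->]]]]; apply: C_sum => j.
by case: (hbb j) => *; apply: C_bE1b.
Qed.

Theorem part4 (T : lmodType k) (tau : M2 -> M2 -> T) : is_tensor B (fun _ => False) tau ->
  exists phi : {linear T -> M2},
    [/\ injective phi, (forall c, C c <-> exists t, c = phi t) &
        forall b1 b2 b3 b4, B b1 -> B b2 -> B b3 -> B b4 ->
          phi (tau b1 b2) * phi (tau b3 b4) = phi (tau (b1 * i2 (EM1 (b2 * b3))) b4)].
Proof.
move=> HT.
have [phi phiE] : exists phi : {linear T -> M2},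
    forall b b', B b -> B b' -> phi (tau b b') = b * E1 * b'.
  apply: (tens_lift HT) => //.
  move=> c a a' b _ _ _; split; first by rewrite !mulrDl -!scalerAl.
  by rewrite mulrDr -!scalerAr.
exists phi; split.
- move=> t t' e.
  have KL j c b b' : B b -> B b' -> kap j (al (c *: b + b')) = c * kap j (al b) + kap j (al b').
    by move=> hb hb'; rewrite al_lin kap_lin //; exact: al_A.
  have KL' j c b b' : B b -> B b' -> kap j (al' (c *: b + b')) = c * kap j (al' b) + kap j (al' b').
    by move=> hb hb'; rewrite al'_lin kap_lin //; exact: al'_A.
  have Kd b : B b -> b = \sum_(j < p) kap j (al b) *: ba (aa j).
    move=> hb; rewrite {1}(b_al hb) {1}(A_dec (al_A hb)) (lin_sum ba_lin).
    by apply: eq_bigr => j _; rewrite (linZ ba_lin).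
  have Kd' b : B b -> b = \sum_(j < p) kap j (al' b) *: bb (aa j).
    move=> hb; rewrite {1}(b_al' hb) {1}(A_dec (al'_A hb)) (lin_sum bb_lin).
    by apply: eq_bigr => j _; rewrite (linZ bb_lin).
  have Pu j : B (ba (aa j)) by apply: ba_B.
  have Pu' j : B (bb (aa j)) by apply: bb_B.
  have [D hD] := tens_span HT B0 Bcl Pu Pu' KL KL' Kd Kd' (t - t').
  have h0 : phi (t - t') = 0 by rewrite linearB /= e subrr.
  move: h0; rewrite hD phi_lift.
  have -> : \sum_(j < p) \sum_(l < p) D j l *: phi (tau (ba (aa j)) (bb (aa l)))
          = \sum_(j < p) \sum_(l < p) (D j l * lam^-1) *: t2 (aa j) (aa l).
    apply: eq_bigr => j _; apply: eq_bigr => l _; rewrite phiE // ba_bb //.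
    by rewrite scalerA.
  move/indep2 => hD0; apply/eqP; rewrite -subr_eq0 hD; apply/eqP.
  rewrite big1 // => j _; rewrite big1 // => l _.
  have := hD0 j l; move/eqP; rewrite mulf_eq0 invr_eq0 (negbTE lam0) orbF => /eqP ->.
  by rewrite scale0r.
- move=> c; split.
    move=> /part3 [q [b [b' [hbb ->]]]]; exists (\sum_(j < q) tau (b j) (b' j)).
    rewrite raddf_sum; apply: eq_bigr => j _; case: (hbb j) => h1 h2.
    by apply/esym/phiE.
  move=> [t ->] z [n0 h ->].
  apply: (tens_ext HT (f := fun t => phi t * X n0) (g := fun t => X n0 * phi t)).
  + exact: lin_comp (linL phi) (lin_mulr _).
  + exact: lin_comp (linL phi) (lin_mull _).
  by move=> a b ha hb; rewrite phiE //; apply: C_bE1b => //; exists n0.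
- move=> b1 b2 b3 b4 h1 h2 h3 h4; rewrite !phiE //; last first.
    exact: BM h1 (B_EM1 (BM h2 h3)).
  have -> : b1 * E1 * b2 * (b3 * E1 * b4) = b1 * (E1 * (b2 * b3) * E1) * b4 by rewrite !mulrA.
  by rewrite e1be1 ?mulrA //; exact: BM.
Qed.

End Depth.

Theorem main_thm :
  (exists (p : nat) (a : 'I_p -> M1), (forall j, A (a j)) /\
     (forall z, exists mm : 'I_p -> M, z = \sum_(j < p) a j * i1 (mm j)) /\
     (forall mm : 'I_p -> M, \sum_(j < p) a j * i1 (mm j) = 0 -> forall j, mm j = 0)) ->
  [/\
   (forall c, C c <-> exists (p : nat) (a a' : 'I_p -> M1),
      (forall j, A (a j) /\ A (a' j)) /\ c = \sum_(j < p) i2 (a j) * e2 * i2 (a' j)),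
   (forall (T : lmodType k) (tau : M1 -> M1 -> T), is_tensor A (fun _ => False) tau ->
      exists phi : {linear T -> M2},
        [/\ injective phi, (forall c, C c <-> exists t, c = phi t) &
            forall a1 a2 a3 a4, A a1 -> A a2 -> A a3 -> A a4 ->
              phi (tau a1 a2) * phi (tau a3 a4) = phi (tau (a1 * i1 (EM (a2 * a3))) a4)]),
   (forall c, C c <-> exists (p : nat) (b b' : 'I_p -> M2),
      (forall j, B (b j) /\ B (b' j)) /\ c = \sum_(j < p) b j * E1 * b' j)
  & (forall (T : lmodType k) (tau : M2 -> M2 -> T), is_tensor B (fun _ => False) tau ->
      exists phi : {linear T -> M2},
        [/\ injective phi, (forall c, C c <-> exists t, c = phi t) &
            forall b1 b2 b3 b4, B b1 -> B b2 -> B b3 -> B b4 ->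
              phi (tau b1 b2) * phi (tau b3 b4) = phi (tau (b1 * i2 (EM1 (b2 * b3))) b4)])].
Proof.
move=> [p [aa [Ha [Hs Hu]]]]; split.
- exact: part1 Ha Hs Hu.
- exact: part2 Ha Hs Hu.
- exact: part3 Ha Hs Hu.
- exact: part4 Ha Hs Hu.
Qed.

End Main.

Theorem proposition3p6 (k : fieldType) (M M1 M2 : algType k)
  (N : M -> Prop) (E : M -> M) (n : nat) (x y : 'I_n -> M) (lam : k)
  (t1 : M -> M -> M1) (EM : {linear M1 -> M})
  (t2 : M1 -> M1 -> M2) (EM1 : {linear M2 -> M1}) :
  (* N is a subalgebra of M *)
  is_subalgebra N ->
  (* E : M -> N is an N-bimodule map with E(1) = 1 *)
  (forall a b, E (a + b) = E a + E b) ->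
  (forall m, N (E m)) ->
  (forall s m s', N s -> N s' -> E (s * m * s') = s * E m * s') ->
  E 1 = 1 ->
  (* quasi-basis, normalisation *)
  (forall m, \sum_(i < n) E (m * x i) * y i = m) ->
  (forall m, \sum_(i < n) x i * E (y i * m) = m) ->
  lam != 0 -> \sum_(i < n) x i * y i = lam^-1%:A ->
  (* irreducibility C_M(N) = k1 *)
  (forall m, centralizer N m -> exists c : k, m = c%:A) ->
  (* first basic construction M1 = M (x)_N M *)
  is_tensor (fun _ => True) N t1 ->
  (forall a b c d, t1 a b * t1 c d = t1 (a * E (b * c)) d) ->
  1 = \sum_(i < n) t1 (x i) (y i) ->
  (forall a b, EM (t1 a b) = lam *: (a * b)) ->
  let i1 := fun m : M => \sum_(i < n) t1 (m * x i) (y i) in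
  let r := fun i : 'I_n => lam^-1 *: t1 (x i) 1 in
  let s := fun i : 'I_n => t1 1 (y i) in
  (* second basic construction M2 = M1 (x)_M M1 *)
  is_tensor (fun _ => True) (fun z => exists m, z = i1 m) t2 ->
  (forall a b c d, t2 a b * t2 c d = t2 (a * i1 (EM (b * c))) d) ->
  1 = \sum_(i < n) t2 (r i) (s i) ->
  (forall a b, EM1 (t2 a b) = lam *: (a * b)) ->
  let i2 := fun z : M1 => \sum_(i < n) t2 (z * r i) (s i) in
  let e1 := i2 (t1 1 1) in
  let e2 := t2 1 1 in
  let A := centralizer (fun z => exists2 m, N m & z = i1 m) in
  let B := centralizer (fun z => exists m, z = i2 (i1 m)) in
  let C := centralizer (fun z => exists2 m, N m & z = i2 (i1 m)) in
  (* depth 2 *)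
  (exists (p : nat) (a : 'I_p -> M1), (forall j, A (a j)) /\
     (forall z, exists mm : 'I_p -> M, z = \sum_(j < p) a j * i1 (mm j)) /\
     (forall mm : 'I_p -> M, \sum_(j < p) a j * i1 (mm j) = 0 -> forall j, mm j = 0)) ->
  (exists (p : nat) (b : 'I_p -> M2), (forall j, B (b j)) /\
     (forall z, exists mm : 'I_p -> M1, z = \sum_(j < p) b j * i2 (mm j)) /\
     (forall mm : 'I_p -> M1, \sum_(j < p) b j * i2 (mm j) = 0 -> forall j, mm j = 0)) ->
  [/\
   (* C = A e2 A *)
   (forall c, C c <-> exists (p : nat) (a a' : 'I_p -> M1),
      (forall j, A (a j) /\ A (a' j)) /\ c = \sum_(j < p) i2 (a j) * e2 * i2 (a' j)),
   (* C ~= A (x)_k A as rings *)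
   (forall (T : lmodType k) (tau : M1 -> M1 -> T), is_tensor A (fun _ => False) tau ->
      exists phi : {linear T -> M2},
        [/\ injective phi, (forall c, C c <-> exists t, c = phi t) &
            forall a1 a2 a3 a4, A a1 -> A a2 -> A a3 -> A a4 ->
              phi (tau a1 a2) * phi (tau a3 a4) = phi (tau (a1 * i1 (EM (a2 * a3))) a4)]),
   (* C = B e1 B *)
   (forall c, C c <-> exists (p : nat) (b b' : 'I_p -> M2),
      (forall j, B (b j) /\ B (b' j)) /\ c = \sum_(j < p) b j * e1 * b' j)
  & (* C ~= B (x)_k B as rings *)
   (forall (T : lmodType k) (tau : M2 -> M2 -> T), is_tensor B (fun _ => False) tau ->
      exists phi : {linear T -> M2},
        [/\ injective phi, (forall c, C c <-> exists t, c = phi t) &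
            forall b1 b2 b3 b4, B b1 -> B b2 -> B b3 -> B b4 ->
              phi (tau b1 b2) * phi (tau b3 b4) = phi (tau (b1 * i2 (EM1 (b2 * b3))) b4)])].
Proof.
move=> HN EaddH ENH EbimH E1H qb1 qb2 lam0 xyH irrH T1 t1mul t1one EMt1 i1 r s
  T2 t2mul t2one EM1t2 i2 e1 e2 A B C D2a D2b.
by apply: main_thm.
Qed.
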